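(* Let $\mathcal{F}=(W,R,S)$ be any simplified $\mathbf{IL}^-(\mathbf{J4}_{+})$-frame. Then: (1) $\mathcal{F}\models \mathbf{J3}$, i.e. $\mathcal{F}\models (A\rhd C)\land(B\rhd C)\to(A\lor B)\rhd C$ for all formulas $A,B,C$; (2) $\mathcal{F}\models \mathbf{J4}_{+}$, i.e. $\mathcal{F}\models \Box(A\to B)\to(C\rhd A\to C\rhd B)$ for all formulas $A,B,C$; (3) $\mathcal{F}\models \mathbf{J6}$, i.e. $\mathcal{F}\models \Box\lnot A\leftrightarrow A\rhd\bot$ for all formulas $A$; (4) $\mathcal{F}\models \Box(A\to B)\to A\rhd B$ for all formulas $A,B$ if and only if $(\forall x,y\in W)(xRy\Rightarrow ySy)$; (5) $\mathcal{F}\models A\rhd(B\lor C)\land B\rhd C\to A\rhd C$ for all formulas $A,B,C$ if and only if for every $x\in W$ and all $y,z,v\in R[x]$, if $ySz$ and $zSv$ then $ySv$ (where $R[x]=\{y\in W: xRy\}$); (6) $\mathcal{F}\models \Diamond A\rhd A$ for all formulas $A$ if and only if $(\forall x,y,z\in W)(xRy \,\&\, yRz\Rightarrow ySz)$.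
   Context: Modal formulas of interpretability logic are built from propositional variables, $\top$, $\bot$ using $\to,\lor,\land$, the unary operator $\Box$ and the binary operator $\rhd$; $\lnot A$ abbreviates $A\to\bot$ and $\Diamond A:=\lnot\Box\lnot A$. A simplified $\mathbf{IL}^-(\mathbf{J4}_{+})$-frame is a triple $(W,R,S)$ where $W$ is a non-empty set, $R$ is a transitive and conversely well-founded binary relation on $W$, and $S$ is an arbitrary binary relation on $W$. A model on it is given by a forcing relation $\Vdash$ between $W$ and formulas, arbitrary on propositional variables, with the usual Boolean clauses, $x\Vdash\Box A$ iff for all $y$ with $xRy$, $y\Vdash A$, and $x\Vdash A\rhd B$ iff for every $y\in W$ with $xRy$ and $y\Vdash A$ there is $z\in W$ with $xRz$, $ySz$ and $z\Vdash B$. A formula $A$ is valid in the frame ($\mathcal{F}\models A$) if $x\Vdash A$ for every such forcing relation and every $x\in W$. *)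

(* Defs.v *)
From Stdlib Require Import Relations.

Inductive formula : Type :=
| fvar : nat -> formula
| ftop : formula
| fbot : formula
| fimp : formula -> formula -> formula
| for_ : formula -> formula -> formula
| fand : formula -> formula -> formula
| fbox : formula -> formula
| frhd : formula -> formula -> formula.

Definition fneg (A : formula) : formula := fimp A fbot.
Definition fdia (A : formula) : formula := fneg (fbox (fneg A)).
Definition fiff (A B : formula) : formula := fand (fimp A B) (fimp B A).

(* A simplified IL^-(J4_+)-frame: W non-empty, R transitive and conversely
   well-founded (no infinite ascending chains x0 R x1 R x2 ...), S arbitrary. *)
Definition simplified_frame (W : Type) (R S : W -> W -> Prop) : Prop :=
  inhabited W /\ transitive W R /\ well_founded (fun y x => R x y).

Fixpoint forces {W : Type} (R S : W -> W -> Prop) (V : nat -> W -> Prop)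
  (x : W) (A : formula) : Prop :=
  match A with
  | fvar p => V p x
  | ftop => True
  | fbot => False
  | fimp A B => forces R S V x A -> forces R S V x B
  | for_ A B => forces R S V x A \/ forces R S V x B
  | fand A B => forces R S V x A /\ forces R S V x B
  | fbox A => forall y, R x y -> forces R S V y A
  | frhd A B => forall y, R x y -> forces R S V y A ->
                  exists z, R x z /\ S y z /\ forces R S V z B
  end.

Definition valid {W : Type} (R S : W -> W -> Prop) (A : formula) : Prop :=
  forall (V : nat -> W -> Prop) (x : W), forces R S V x A.

(* Main.v *)
Require Import Defs.
From Stdlib Require Import Classical.

Theorem proposition2p13 (W : Type) (R S : W -> W -> Prop) :
  simplified_frame W R S ->
  (* (1) J3 *)
  (forall A B C : formula,
     valid R S (fimp (fand (frhd A C) (frhd B C)) (frhd (for_ A B) C))) /\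
  (* (2) J4_+ *)
  (forall A B C : formula,
     valid R S (fimp (fbox (fimp A B)) (fimp (frhd C A) (frhd C B)))) /\
  (* (3) J6 *)
  (forall A : formula, valid R S (fiff (fbox (fneg A)) (frhd A fbot))) /\
  (* (4) *)
  ((forall A B : formula, valid R S (fimp (fbox (fimp A B)) (frhd A B))) <->
   (forall x y : W, R x y -> S y y)) /\
  (* (5) *)
  ((forall A B C : formula,
      valid R S (fimp (fand (frhd A (for_ B C)) (frhd B C)) (frhd A C))) <->
   (forall x y z v : W, R x y -> R x z -> R x v -> S y z -> S z v -> S y v)) /\
  (* (6) *)
  ((forall A : formula, valid R S (frhd (fdia A) A)) <->
   (forall x y z : W, R x y -> R y z -> S y z)).
Proof.
  intros [_ [Htr _]].
  split; [|split; [|split; [|split; [|split]]]].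
  - intros A B C V x [H1 H2] y Hxy [Ha|Hb]; [exact (H1 y Hxy Ha)|exact (H2 y Hxy Hb)].
  - intros A B C V x Hb Hc y Hxy Hy.
    destruct (Hc y Hxy Hy) as [z [Hz1 [Hz2 Hz3]]].
    exists z. split; [exact Hz1|split; [exact Hz2|exact (Hb z Hz1 Hz3)]].
  - intros A V x; split.
    + intros H y Hxy Hy. exfalso. exact (H y Hxy Hy).
    + intros H y Hxy Hy. destruct (H y Hxy Hy) as [z [_ [_ []]]].
  - split.
    + intros H x y Hxy.
      set (V := fun (_ : nat) (w : W) => w = y).
      destruct (H (fvar 0) (fvar 0) V x (fun w _ h => h) y Hxy eq_refl)
        as [z [_ [Hz ->]]]. exact Hz.
    + intros H A B V x Hb y Hxy Hy. exists y. split; [exact Hxy|split].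
      * exact (H x y Hxy).
      * exact (Hb y Hxy Hy).
  - split.
    + intros H x y z v Hxy Hxz Hxv Hyz Hzv.
      set (V := fun (n : nat) (w : W) =>
        match n with 0 => w = y | 1 => w = z | _ => w = v end).
      assert (K := H (fvar 0) (fvar 1) (fvar 2) V x).
      simpl in K.
      destruct (K (conj (fun w _ (hw : w = y) => ex_intro _ z (conj Hxz (conj (eq_ind_r (fun a => S a z) Hyz hw) (or_introl eq_refl))))
                        (fun w _ (hw : w = z) => ex_intro _ v (conj Hxv (conj (eq_ind_r (fun a => S a v) Hzv hw) eq_refl))))
                  y Hxy eq_refl) as [w [_ [Hw ->]]]. exact Hw.
    + intros H A B C V x [H1 H2] y Hxy Hy.
      destruct (H1 y Hxy Hy) as [z [Hxz [Hyz [Hb|Hc]]]].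
      * destruct (H2 z Hxz Hb) as [v [Hxv [Hzv Hv]]].
        exists v. split; [exact Hxv|split; [|exact Hv]].
        exact (H x y z v Hxy Hxz Hxv Hyz Hzv).
      * exists z. split; [exact Hxz|split; [exact Hyz|exact Hc]].
  - split.
    + intros H x y z Hxy Hyz.
      set (V := fun (_ : nat) (w : W) => w = z).
      assert (K := H (fvar 0) V x y Hxy).
      simpl in K.
      destruct K as [w [_ [Hw ->]]].
      * intro Hn. exact (Hn z Hyz eq_refl).
      * exact Hw.
    + intros H A V x y Hxy Hy. simpl in Hy.
      apply NNPP. intro Hn. apply Hy. intros z Hyz Hz.
      apply Hn. exists z. split; [exact (Htr _ _ _ Hxy Hyz)|split; [exact (H x y z Hxy Hyz)|exact Hz]].
Qed.
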